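(* Consider $N$ agents $\mathcal{V}=\{1,\dots,N\}$ interacting over a fixed graph in which agent $i$ has the nonempty neighbor set $\mathcal{N}_i$ of cardinality $n_i$. Let $\beta\in[0,1)$ and let $(q_p(k))_{k\ge0}$ be a sequence with values in $\{-1,1\}$. The opinions evolve by $$\theta_i(k+1)=\theta_i(k)+\bigl(1-\theta_i(k)^2\bigr)\Bigl[\beta\bigl(q_p(k)-\theta_i(k)\bigr)+(1-\beta)\frac{1}{n_i}\sum_{j\in\mathcal{N}_i}\bigl(q_j(k)-\theta_i(k)\bigr)\Bigr],$$ with actions $q_j(k)=1$ if $\theta_j(k)>0$ or ($\theta_j(k)=0$ and $q_j(k-1)=1$), and $q_j(k)=-1$ if $\theta_j(k)<0$ or ($\theta_j(k)=0$ and $q_j(k-1)=-1$), and with $\theta_j(0)\in(-1,1)\setminus\{0\}$ for all $j$. Let $A\subset\mathcal{V}$ be a weakly robust polarized cluster, and suppose $q_p(k)=q_i(0)$ for all $k\in\mathbb{N}$ and all $i\in A$. Then $q_i(k)=q_i(0)$ for all $i\in A$ and all $k\in\mathbb{N}$.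
   Context: The neighbor set $\mathcal{N}_i$ consists of the agents $j$ with $(j,i)$ an edge of the graph. A subset $A\subset\mathcal{V}$ is a weakly robust polarized cluster if (i) $q_i(0)=q_j(0)$ for all $i,j\in A$, and (ii) for all $i\in A$, $|\mathcal{N}_i\cap A|\ge|\mathcal{N}_i\setminus A|-\frac{\beta}{1-\beta}|\mathcal{N}_i|$. *)

(* Defs.v *)
From mathcomp Require Import all_boot all_order all_algebra.
Set Implicit Arguments. Unset Strict Implicit. Unset Printing Implicit Defensive.
Import Order.TTheory GRing.Theory Num.Theory.
Local Open Scope ring_scope.

Section Opinion.
Variables (R : realFieldType) (V : finType).

Definition nbrs (e : rel V) (i : V) : {set V} := [set j | e j i].

Definition act_step (th qprev : R) : R :=
  if 0 < th then 1 else if th < 0 then -1 else qprev.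

(* Actions generated by the opinion trajectory theta.  At k = 0 the opinion
   is nonzero (standing assumption), so only its sign matters. *)
Fixpoint action (theta : nat -> V -> R) (j : V) (k : nat) : R :=
  match k with
  | 0 => if 0 < theta 0%N j then 1 else -1
  | k'.+1 => act_step (theta k'.+1 j) (action theta j k')
  end.

Definition opinion_dynamics (e : rel V) (beta : R) (qp : nat -> R)
    (theta : nat -> V -> R) : Prop :=
  forall (k : nat) (i : V),
    theta k.+1 i = theta k i + (1 - theta k i ^+ 2) *
      (beta * (qp k - theta k i) +
       (1 - beta) * (#|nbrs e i|%:R)^-1 *
         \sum_(j in nbrs e i) (action theta j k - theta k i)).

Definition weakly_robust_polarized_cluster (e : rel V) (beta : R)
    (theta : nat -> V -> R) (A : {set V}) : Prop :=
  (forall i j, i \in A -> j \in A -> action theta i 0 = action theta j 0) /\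
  (forall i, i \in A ->
     (#|nbrs e i :&: A|%:R : R) >=
       #|nbrs e i :\: A|%:R - beta / (1 - beta) * #|nbrs e i|%:R).

End Opinion.

(* Main.v *)
Require Import Defs.
From mathcomp Require Import all_boot all_order all_algebra.
From mathcomp Require Import ring lra.
Import Order.TTheory GRing.Theory Num.Theory.
Local Open Scope ring_scope.

Lemma bnd (R : realFieldType) (t c : R): -1<=t<=1 -> -1<=c<=1 -> -1 <= t + (1 - t^+2)*(c - t) <= 1.
Proof. move=> /andP[h1 h2] /andP[h3 h4].
have a1: 0 <= (1-t)*(t*t) by apply: mulr_ge0; nra.
have a2: 0 <= (1-t)*((1+t)*(1-c)) by apply: mulr_ge0; [lra| apply: mulr_ge0; lra].
have a3: 0 <= (1+t)*(t*t) by apply: mulr_ge0; nra.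
have a4: 0 <= (1+t)*((1-t)*(1+c)) by apply: mulr_ge0; [lra| apply: mulr_ge0; lra].
apply/andP; split; nra. Qed.

Lemma key (R : realFieldType) (t c : R): 0<=t<=1 -> 0 <= c -> 0 <= t + (1 - t^+2)*(c - t).
Proof. move=> /andP[h1 h2] hc. have h3: 0 <= 1 - t^+2 by nra. nra. Qed.

Lemma act_pm (R : realFieldType) (V : finType) (theta : nat -> V -> R) j k :
  action theta j k = 1 \/ action theta j k = -1.
Proof.
elim: k => [|k IH] /=; first by case: ifP; auto.
rewrite /act_step; case: ifP => _; first by auto.
by case: ifP => _; auto.
Qed.

Theorem mainTheorem5 (R : realFieldType) (V : finType) (e : rel V)
    (beta : R) (qp : nat -> R) (theta : nat -> V -> R) (A : {set V}) :
  (forall i : V, nbrs e i != set0) ->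
  0 <= beta -> beta < 1 ->
  (forall k, qp k = 1 \/ qp k = -1) ->
  (forall j : V, -1 < theta 0%N j < 1 /\ theta 0%N j != 0) ->
  opinion_dynamics e beta qp theta ->
  weakly_robust_polarized_cluster e beta theta A ->
  (forall (k : nat) (i : V), i \in A -> qp k = action theta i 0) ->
  forall (i : V) (k : nat), i \in A -> action theta i k = action theta i 0.
Proof.
move=> hN hb0 hb1 hqp h0 hdyn [hA1 hA2] hqA i k iA.
set s := action theta i 0.
have spm : s = 1 \/ s = -1 by apply: act_pm.
have s2 : s * s = 1 by case: spm => ->; rewrite ?mulrNN mulr1.
set n := fun j => (#|nbrs e j|%:R : R).
have npos : forall j, 0 < n j.
  move=> j; rewrite /n ltr0n lt0n cards_eq0; exact: hN.
set S := fun k j => \sum_(l in nbrs e j) action theta l k.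
have upd : forall k j, theta k.+1 j = theta k j + (1 - theta k j ^+ 2) *
   ((beta * qp k + (1 - beta) * ((n j)^-1 * S k j)) - theta k j).
  move=> k' j; rewrite hdyn; congr (_ + _ * _).
  rewrite sumrB sumr_const -/(S k' j) -mulr_natr -/(n j).
  have := npos j; set m := n j => mp.
  field; lra.
have Sb : forall k j, - n j <= S k j <= n j.
  move=> k' j; rewrite /S /n; apply/andP; split.
    have -> : - (#|nbrs e j|%:R : R) = \sum_(l in nbrs e j) (-1 : R) by rewrite sumr_const mulNrn.
    by apply: ler_sum => l _; case: (act_pm _ _ theta l k') => ->; lra.
  have -> : (#|nbrs e j|%:R : R) = \sum_(l in nbrs e j) (1 : R) by rewrite sumr_const.
  by apply: ler_sum => l _; case: (act_pm _ _ theta l k') => ->; lra.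
have bound : forall k j, -1 <= theta k j <= 1.
  elim=> [|k' IH] j.
    by case: (h0 j) => /andP[a b] _; apply/andP; split; lra.
  rewrite upd; apply: bnd; first exact: IH.
  have := Sb k' j; have := npos j.
  set m := n j; set x := S k' j => mp /andP[x1 x2].
  have y1 : -1 <= m^-1 * x.
    by rewrite -(mulVf (lt0r_neq0 mp)) -mulrN; apply: ler_wpM2l => //; rewrite invr_ge0 ltW.
  have y2 : m^-1 * x <= 1.
    by rewrite -(mulVf (lt0r_neq0 mp)); apply: ler_wpM2l => //; rewrite invr_ge0 ltW.
  by case: (hqp k') => ->; apply/andP; split; nra.
have inv : forall k j, j \in A -> 0 <= s * theta k j /\ action theta j k = s.
  elim=> [|k' IH] j jA.
    have -> : action theta j 0 = s by rewrite /s (hA1 j i).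
    split=> //; move: (h0 j) => [_ nz].
    rewrite /s (hA1 i j) //=; case: ifP => h; first by rewrite mul1r ltW.
    by rewrite mulN1r oppr_ge0; move/negbT: h; rewrite -leNgt.
  have pos : 0 <= s * theta k'.+1 j.
    rewrite upd.
    set t := theta k' j.
    set c := beta * qp k' + (1 - beta) * ((n j)^-1 * S k' j).
    have -> : s * (t + (1 - t ^+ 2) * (c - t)) =
              s * t + (1 - (s * t) ^+ 2) * (s * c - s * t).
      by rewrite exprMn [s ^+ 2]expr2 s2 mul1r; ring.
    apply: key.
      have := bound k' j; rewrite -/t => /andP[b1 b2].
      by rewrite (IH j jA).1 /=; case: spm => ->; lra.
    have hSs : #|nbrs e j :&: A|%:R - #|nbrs e j :\: A|%:R <= s * S k' j.
      rewrite /S (big_setID A) mulrDr.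
      apply: lerD.
        rewrite -sumr_const mulr_sumr; apply: ler_sum => l.
        by rewrite in_setI => /andP[_ lA]; rewrite (IH l lA).2 s2.
      have -> : - (#|nbrs e j :\: A|%:R : R) = \sum_(l in nbrs e j :\: A) (-1 : R) by rewrite sumr_const mulNrn.
      rewrite mulr_sumr; apply: ler_sum => l _.
      by case: spm => ->; case: (act_pm _ _ theta l k') => ->; lra.
    have hw := hA2 j jA.
    move: hSs hw (npos j); rewrite /c /n.
    set m := (#|nbrs e j|%:R : R).
    set a := (#|nbrs e j :&: A|%:R : R).
    set b := (#|nbrs e j :\: A|%:R : R).
    set x := S k' j => hSs hw mp.
    rewrite (hqA k' j jA) -/s -(hA1 i j) // -/s.
    have e1 : s * (beta * s + (1 - beta) * (m^-1 * x)) =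
              beta + m^-1 * ((1 - beta) * (s * x)).
      have -> : s * (beta * s + (1 - beta) * (m^-1 * x)) = beta * (s*s) + m^-1*((1-beta)*(s*x)) by ring.
      by rewrite s2 mulr1.
    rewrite e1.
    have h3 : - (beta * m) <= (1 - beta) * (s * x).
      have : (1 - beta) * (a - b) <= (1 - beta) * (s * x) by apply: ler_wpM2l; lra.
      have : (1 - beta) * (b - beta / (1 - beta) * m) <= (1 - beta) * a by apply: ler_wpM2l; lra.
      have -> : (1 - beta) * (b - beta / (1 - beta) * m) = (1-beta) * b - beta * m.
        by field; lra.
      nra.
    have h4 : m^-1 * (- (beta * m)) <= m^-1 * ((1 - beta) * (s * x)).
      by apply: ler_wpM2l => //; rewrite invr_ge0 ltW.
    have : m^-1 * (- (beta * m)) = - beta by field; lra.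
    lra.
  split=> //=; rewrite /act_step (IH j jA).2.
  case: spm pos => ->; rewrite ?mul1r ?mulN1r ?oppr_ge0 => pos.
    case: ifP => // _; by rewrite ltNge pos.
  by rewrite ltNge pos /=; case: ifP.
by case: (inv k i iA).
Qed.
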